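(* Let $\mathcal V$ be braided monoidal closed, $H$ a Hopf $\mathcal V$-category with invertible antipode $s$, and $t$ a non-singular left integral family for $H$. Let $x\in X$ and let $f_x,g_x\colon H_{x,x}\to I$ be morphisms such that $$(1\otimes f_x)\circ\delta_{xx}\circ t^{xx}=j_x\quad\text{and}\quad (g_x\otimes1)\circ\delta_{xx}\circ t^{xx}=j_x .$$ Then $g_x=f_x\circ s_{xx}^{-1}$. In particular, if $\bar p_x$ is a right inverse of $p_{xx}$ and $\bar q_x$ a right inverse of $q_{xx}$, then $$\mathrm{ev}_{xx}\circ(\bar p_x\otimes1)\circ(j_x\otimes1)=\mathrm{ev}_{xx}\circ\sigma_{H_{x,x},H^*_{x,x}}\circ(1\otimes\bar q_x)\circ(1\otimes j_x)\circ s_{xx}^{-1}\colon H_{x,x}\to I.$$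
   Context: $\mathcal V$ is a braided monoidal category with tensor $\otimes$, unit $I$, braiding $\sigma$ (unit constraints suppressed), which is closed; $A^*_{x,y}:=[A_{x,y},I]$ with evaluation $\mathrm{ev}_{xy}\colon A^*_{x,y}\otimes A_{x,y}\to I$. A $\mathcal V$-category $A$ with object set $X$ has objects $A_{x,y}$, compositions $m_{xyz}\colon A_{x,y}\otimes A_{y,z}\to A_{x,z}$, units $j_x\colon I\to A_{x,x}$, associative and unital. Semi-Hopf: each $A_{x,y}$ is a comonoid $(\delta_{xy},\epsilon_{xy})$ and all $m_{xyz},j_x$ are comonoid morphisms. Hopf: there are $s_{xy}\colon A_{x,y}\to A_{y,x}$ with $m_{xyx}\circ(1\otimes s_{xy})\circ\delta_{xy}=j_x\circ\epsilon_{xy}$ and $m_{yxy}\circ(s_{xy}\otimes1)\circ\delta_{xy}=j_y\circ\epsilon_{xy}$; invertible antipode means each $s_{xy}$ is an isomorphism. Left integral family: $t^{xy}\colon I\to A_{x,y}$ with $m_{zxy}\circ(1\otimes t^{xy})=t^{zy}\circ\epsilon_{zx}$ for all $x,y,z$. For such $t$: $p_{xy}:=(\mathrm{ev}_{xy}\otimes1)\circ(1\otimes\delta_{xy})\circ(1\otimes t^{xy})\colon A^*_{x,y}\to A_{x,y}$ and $q_{xy}:=(1\otimes\mathrm{ev}_{xy})\circ(1\otimes\sigma_{A_{x,y},A^*_{x,y}})\circ(\delta_{xy}\otimes1)\circ(t^{xy}\otimes1)\colon A^*_{x,y}\to A_{x,y}$. $t$ is non-singular if all $p_{xx}$ and all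 $q_{xx}$ ($x\in X$) are split epimorphisms. *)

(* Defs.v *)
(* Hom-sets carry Leibniz equality. *)
Set Implicit Arguments.
Unset Strict Implicit.

Record Cat := {
  Ob :> Type;
  Hom : Ob -> Ob -> Type;
  cmp : forall a b c : Ob, Hom b c -> Hom a b -> Hom a c;
  idm : forall a : Ob, Hom a a }.
Arguments cmp {_ _ _ _} _ _.
Arguments idm {_} _.
Arguments Hom : clear implicits.

Record CatAx (C : Cat) : Prop := {
  cmpA : forall a b c d (f : Hom C c d) (g : Hom C b c) (h : Hom C a b),
      cmp f (cmp g h) = cmp (cmp f g) h;
  cmp1l : forall a b (f : Hom C a b), cmp (idm b) f = f;
  cmp1r : forall a b (f : Hom C a b), cmp f (idm a) = f }.

Record MonData (C : Cat) := {
  tens : C -> C -> C;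
  tensm : forall a b c d : C, Hom C a b -> Hom C c d -> Hom C (tens a c) (tens b d);
  unitI : C;
  alpha : forall a b c : C, Hom C (tens (tens a b) c) (tens a (tens b c));
  alphainv : forall a b c : C, Hom C (tens a (tens b c)) (tens (tens a b) c);
  lam : forall a : C, Hom C (tens unitI a) a;
  laminv : forall a : C, Hom C a (tens unitI a);
  rho : forall a : C, Hom C (tens a unitI) a;
  rhoinv : forall a : C, Hom C a (tens a unitI);
  braid : forall a b : C, Hom C (tens a b) (tens b a);
  braidinv : forall a b : C, Hom C (tens b a) (tens a b) }.
Arguments tensm {_} _ {_ _ _ _} _ _.

Record ClosedData (C : Cat) (M : MonData C) := {
  ihom : C -> C -> C;
  ev : forall b c : C, Hom C (tens M (ihom b c) b) c;
  cur : forall a b c : C, Hom C (tens M a b) c -> Hom C a (ihom b c) }.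

Section BMCAxSec.
Variables (C : Cat) (M : MonData C) (K : ClosedData M).
Local Notation "g ∘ f" := (cmp g f) (at level 40, left associativity).
Local Notation "a ⊗ b" := (tens M a b) (at level 30, right associativity).
Local Notation "f ⊠ g" := (tensm M f g) (at level 35, right associativity).
Local Notation α := (alpha M).
Local Notation α' := (alphainv M).
Local Notation σ := (braid M).
Local Notation I := (unitI M).

Record BMCAx : Prop := {
  tensm_id : forall a b : C, idm a ⊠ idm b = idm (a ⊗ b);
  tensm_cmp : forall a b c a' b' c' (f : Hom C a b) (f' : Hom C b c)
      (g : Hom C a' b') (g' : Hom C b' c'), (f' ∘ f) ⊠ (g' ∘ g) = (f' ⊠ g') ∘ (f ⊠ g);
  alpha_iso1 : forall a b c, α' a b c ∘ α a b c = idm _;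
  alpha_iso2 : forall a b c, α a b c ∘ α' a b c = idm _;
  alpha_nat : forall a b c a' b' c' (f : Hom C a a') (g : Hom C b b') (h : Hom C c c'),
      α a' b' c' ∘ ((f ⊠ g) ⊠ h) = (f ⊠ (g ⊠ h)) ∘ α a b c;
  lam_iso1 : forall a, laminv M a ∘ lam M a = idm _;
  lam_iso2 : forall a, lam M a ∘ laminv M a = idm _;
  lam_nat : forall a b (f : Hom C a b), lam M b ∘ (idm I ⊠ f) = f ∘ lam M a;
  rho_iso1 : forall a, rhoinv M a ∘ rho M a = idm _;
  rho_iso2 : forall a, rho M a ∘ rhoinv M a = idm _;
  rho_nat : forall a b (f : Hom C a b), rho M b ∘ (f ⊠ idm I) = f ∘ rho M a;
  pentagon : forall a b c d,
      (idm a ⊠ α b c d) ∘ α a (b ⊗ c) d ∘ (α a b c ⊠ idm d)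
      = α a b (c ⊗ d) ∘ α (a ⊗ b) c d;
  triangle : forall a b, (idm a ⊠ lam M b) ∘ α a I b = rho M a ⊠ idm b;
  braid_iso1 : forall a b, braidinv M a b ∘ σ a b = idm _;
  braid_iso2 : forall a b, σ a b ∘ braidinv M a b = idm _;
  braid_nat : forall a b a' b' (f : Hom C a a') (g : Hom C b b'),
      σ a' b' ∘ (f ⊠ g) = (g ⊠ f) ∘ σ a b;
  hexagon1 : forall a b c,
      α b c a ∘ σ a (b ⊗ c) ∘ α a b c
      = (idm b ⊠ σ a c) ∘ α b a c ∘ (σ a b ⊠ idm c);
  hexagon2 : forall a b c,
      α' c a b ∘ σ (a ⊗ b) c ∘ α' a b c
      = (σ a c ⊠ idm b) ∘ α' a c b ∘ (idm a ⊠ σ b c);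
  ev_cur : forall a b c (f : Hom C (a ⊗ b) c), ev K b c ∘ (cur K f ⊠ idm b) = f;
  cur_uniq : forall a b c (f : Hom C (a ⊗ b) c) (g : Hom C a (ihom K b c)),
      ev K b c ∘ (g ⊠ idm b) = f -> g = cur K f }.
End BMCAxSec.

Record BMC := {
  bcat : Cat;
  bmon : MonData bcat;
  bclo : ClosedData bmon;
  bcatax : CatAx bcat;
  bax : BMCAx bclo }.

Definition vHom {V : BMC} (a b : bcat V) : Type := Hom (bcat V) a b.
Definition vcomp {V : BMC} {a b c : bcat V} (g : vHom b c) (f : vHom a b) : vHom a c :=
  cmp g f.
Definition vid {V : BMC} (a : bcat V) : vHom a a := idm a.
Definition vtens {V : BMC} (a b : bcat V) : bcat V := tens (bmon V) a b.
Definition vtm {V : BMC} {a b c d : bcat V} (f : vHom a b) (g : vHom c d)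
  : vHom (vtens a c) (vtens b d) := tensm (bmon V) f g.
Definition vI (V : BMC) : bcat V := unitI (bmon V).
Definition valpha {V : BMC} (a b c : bcat V) : vHom (vtens (vtens a b) c) (vtens a (vtens b c)) :=
  alpha (bmon V) a b c.
Definition valphainv {V : BMC} (a b c : bcat V) : vHom (vtens a (vtens b c)) (vtens (vtens a b) c) :=
  alphainv (bmon V) a b c.
Definition vlam {V : BMC} (a : bcat V) : vHom (vtens (vI V) a) a := lam (bmon V) a.
Definition vlaminv {V : BMC} (a : bcat V) : vHom a (vtens (vI V) a) := laminv (bmon V) a.
Definition vrho {V : BMC} (a : bcat V) : vHom (vtens a (vI V)) a := rho (bmon V) a.
Definition vrhoinv {V : BMC} (a : bcat V) : vHom a (vtens a (vI V)) := rhoinv (bmon V) a.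
Definition vbraid {V : BMC} (a b : bcat V) : vHom (vtens a b) (vtens b a) := braid (bmon V) a b.
Definition vdual {V : BMC} (a : bcat V) : bcat V := ihom (bclo V) a (vI V).
Definition vev {V : BMC} (a : bcat V) : vHom (vtens (vdual a) a) (vI V) :=
  ev (bclo V) a (vI V).

Notation "g ∘ f" := (vcomp g f) (at level 40, left associativity).
Notation "a ⊗ b" := (vtens a b) (at level 30, right associativity).
Notation "f ⊠ g" := (vtm f g) (at level 35, right associativity).

Definition vmid {V : BMC} (a b c d : bcat V) : vHom ((a ⊗ b) ⊗ (c ⊗ d)) ((a ⊗ c) ⊗ (b ⊗ d)) :=
  valphainv a c (b ⊗ d)
  ∘ (vid a ⊠ (valpha c b d ∘ (vbraid b c ⊠ vid d) ∘ valphainv b c d))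
  ∘ valpha a b (c ⊗ d).

Record HopfData (V : BMC) := {
  hX : Type;
  hA : hX -> hX -> bcat V;
  hm : forall x y z : hX, vHom (hA x y ⊗ hA y z) (hA x z);
  hj : forall x : hX, vHom (vI V) (hA x x);
  hdelta : forall x y : hX, vHom (hA x y) (hA x y ⊗ hA x y);
  heps : forall x y : hX, vHom (hA x y) (vI V);
  hs : forall x y : hX, vHom (hA x y) (hA y x) }.
Arguments hA {V} _ x y.
Arguments hm {V} _ x y z.
Arguments hj {V} _ x.
Arguments hdelta {V} _ x y.
Arguments heps {V} _ x y.
Arguments hs {V} _ x y.

Section HopfDefs.
Variables (V : BMC) (H : HopfData V).
Local Notation A := (hA H).
Local Notation m := (hm H).
Local Notation j := (hj H).
Local Notation δ := (hdelta H).
Local Notation ε := (heps H).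
Local Notation s := (hs H).

Definition is_Vcategory : Prop :=
  (forall w x y z : hX H,
      m w y z ∘ (m w x y ⊠ vid (A y z))
      = m w x z ∘ (vid (A w x) ⊠ m x y z) ∘ valpha (A w x) (A x y) (A y z))
  /\ (forall x y : hX H, m x x y ∘ (j x ⊠ vid (A x y)) = vlam (A x y))
  /\ (forall x y : hX H, m x y y ∘ (vid (A x y) ⊠ j y) = vrho (A x y)).

Definition is_semi_Hopf : Prop :=
  (forall x y : hX H,
      valpha (A x y) (A x y) (A x y) ∘ (δ x y ⊠ vid (A x y)) ∘ δ x y
      = (vid (A x y) ⊠ δ x y) ∘ δ x y)
  /\ (forall x y : hX H, vlam (A x y) ∘ (ε x y ⊠ vid (A x y)) ∘ δ x y = vid (A x y))
  /\ (forall x y : hX H, vrho (A x y) ∘ (vid (A x y) ⊠ ε x y) ∘ δ x y = vid (A x y))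
  /\ (forall x y z : hX H,
      δ x z ∘ m x y z
      = (m x y z ⊠ m x y z) ∘ vmid (A x y) (A x y) (A y z) (A y z) ∘ (δ x y ⊠ δ y z))
  /\ (forall x y z : hX H, ε x z ∘ m x y z = vlam (vI V) ∘ (ε x y ⊠ ε y z))
  /\ (forall x : hX H, δ x x ∘ j x = (j x ⊠ j x) ∘ vlaminv (vI V))
  /\ (forall x : hX H, ε x x ∘ j x = vid (vI V)).

Definition is_antipode : Prop :=
  forall x y : hX H,
    m x y x ∘ (vid (A x y) ⊠ s x y) ∘ δ x y = j x ∘ ε x y
    /\ m y x y ∘ (s x y ⊠ vid (A x y)) ∘ δ x y = j y ∘ ε x y.

Definition is_Hopf_Vcategory : Prop := is_Vcategory /\ is_semi_Hopf /\ is_antipode.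

Definition is_antipode_inverse (sinv : forall x y : hX H, vHom (A y x) (A x y)) : Prop :=
  forall x y : hX H, s x y ∘ sinv x y = vid (A y x) /\ sinv x y ∘ s x y = vid (A x y).

Definition left_integral (t : forall x y : hX H, vHom (vI V) (A x y)) : Prop :=
  forall x y z : hX H,
    m z x y ∘ (vid (A z x) ⊠ t x y) ∘ vrhoinv (A z x) = t z y ∘ ε z x.

Definition p_map (t : forall x y : hX H, vHom (vI V) (A x y)) (x y : hX H)
  : vHom (vdual (A x y)) (A x y) :=
  vlam (A x y) ∘ (vev (A x y) ⊠ vid (A x y))
  ∘ valphainv (vdual (A x y)) (A x y) (A x y)
  ∘ (vid (vdual (A x y)) ⊠ δ x y) ∘ (vid (vdual (A x y)) ⊠ t x y)
  ∘ vrhoinv (vdual (A x y)).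

Definition q_map (t : forall x y : hX H, vHom (vI V) (A x y)) (x y : hX H)
  : vHom (vdual (A x y)) (A x y) :=
  vrho (A x y) ∘ (vid (A x y) ⊠ vev (A x y))
  ∘ (vid (A x y) ⊠ vbraid (A x y) (vdual (A x y)))
  ∘ valpha (A x y) (A x y) (vdual (A x y))
  ∘ (δ x y ⊠ vid (vdual (A x y))) ∘ (t x y ⊠ vid (vdual (A x y)))
  ∘ vlaminv (vdual (A x y)).

Definition split_epi {a b : bcat V} (f : vHom a b) : Prop :=
  exists r : vHom b a, f ∘ r = vid b.

Definition non_singular (t : forall x y : hX H, vHom (vI V) (A x y)) : Prop :=
  forall x : hX H, split_epi (p_map t x x) /\ split_epi (q_map t x x).
End HopfDefs.

(* Main.v *)
Require Import Defs.
From Corelib Require Import ssreflect.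

Lemma cA {V : BMC} {a b c d : bcat V} (h : vHom c d) (g : vHom b c) (f : vHom a b) :
  (h ∘ g) ∘ f = h ∘ (g ∘ f).
Proof. symmetry. exact (cmpA (bcatax V) h g f). Qed.
Lemma c1l {V : BMC} {a b : bcat V} (f : vHom a b) : vid b ∘ f = f.
Proof. exact (cmp1l (bcatax V) f). Qed.
Lemma c1r {V : BMC} {a b : bcat V} (f : vHom a b) : f ∘ vid a = f.
Proof. exact (cmp1r (bcatax V) f). Qed.
Lemma tid {V : BMC} (a b : bcat V) : vid a ⊠ vid b = vid (a ⊗ b).
Proof. exact (tensm_id (bax V) a b). Qed.
Lemma tc {V : BMC} {a b c a' b' c' : bcat V} (f : vHom a b) (f' : vHom b c)
  (g : vHom a' b') (g' : vHom b' c') : (f' ∘ f) ⊠ (g' ∘ g) = (f' ⊠ g') ∘ (f ⊠ g).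
Proof. exact (tensm_cmp (bax V) f f' g g'). Qed.

Lemma a_nat {V : BMC} {a b c a' b' c' : bcat V} (f : vHom a a') (g : vHom b b') (h : vHom c c') :
  valpha a' b' c' ∘ ((f ⊠ g) ⊠ h) = (f ⊠ (g ⊠ h)) ∘ valpha a b c.
Proof. exact (alpha_nat (bax V) f g h). Qed.
Lemma aia {V : BMC} (a b c : bcat V) : valphainv a b c ∘ valpha a b c = vid _.
Proof. exact (alpha_iso1 (bax V) a b c). Qed.
Lemma aai {V : BMC} (a b c : bcat V) : valpha a b c ∘ valphainv a b c = vid _.
Proof. exact (alpha_iso2 (bax V) a b c). Qed.
Lemma lli {V : BMC} (a : bcat V) : vlam a ∘ vlaminv a = vid _.
Proof. exact (lam_iso2 (bax V) a). Qed.
Lemma lil {V : BMC} (a : bcat V) : vlaminv a ∘ vlam a = vid _.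
Proof. exact (lam_iso1 (bax V) a). Qed.
Lemma rri {V : BMC} (a : bcat V) : vrho a ∘ vrhoinv a = vid _.
Proof. exact (rho_iso2 (bax V) a). Qed.
Lemma rir {V : BMC} (a : bcat V) : vrhoinv a ∘ vrho a = vid _.
Proof. exact (rho_iso1 (bax V) a). Qed.
Lemma l_nat {V : BMC} {a b : bcat V} (f : vHom a b) : vlam b ∘ (vid (vI V) ⊠ f) = f ∘ vlam a.
Proof. exact (lam_nat (bax V) f). Qed.
Lemma r_nat {V : BMC} {a b : bcat V} (f : vHom a b) : vrho b ∘ (f ⊠ vid (vI V)) = f ∘ vrho a.
Proof. exact (rho_nat (bax V) f). Qed.
Lemma b_nat {V : BMC} {a b a' b' : bcat V} (f : vHom a a') (g : vHom b b') :
  vbraid a' b' ∘ (f ⊠ g) = (g ⊠ f) ∘ vbraid a b.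
Proof. exact (braid_nat (bax V) f g). Qed.
Lemma tri {V : BMC} (a b : bcat V) :
  (vid a ⊠ vlam b) ∘ valpha a (vI V) b = vrho a ⊠ vid b.
Proof. exact (triangle (bax V) a b). Qed.
Lemma pent {V : BMC} (a b c d : bcat V) :
  (vid a ⊠ valpha b c d) ∘ (valpha a (b ⊗ c) d ∘ (valpha a b c ⊠ vid d))
      = valpha a b (c ⊗ d) ∘ valpha (a ⊗ b) c d.
Proof. rewrite -cA. exact (pentagon (bax V) a b c d). Qed.

Ltac ra := repeat rewrite cA.
Lemma kk1 {V : BMC} {b c d : bcat V} {p : vHom c d} {q : vHom b c} {r : vHom b d} :
  p ∘ q = r -> forall z (k : vHom z b), p ∘ (q ∘ k) = r ∘ k.
Proof. intros E z k. rewrite -E. ra. reflexivity. Qed.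
Lemma kk2 {V : BMC} {b c d e : bcat V} {p : vHom d e} {q1 : vHom c d} {q2 : vHom b c} {r : vHom b e} :
  p ∘ (q1 ∘ q2) = r -> forall z (k : vHom z b), p ∘ (q1 ∘ (q2 ∘ k)) = r ∘ k.
Proof. intros E z k. rewrite -E. ra. reflexivity. Qed.
Lemma kk3 {V : BMC} {b c d e f : bcat V} {p : vHom e f} {q1 : vHom d e} {q2 : vHom c d} {q3 : vHom b c} {r : vHom b f} :
  p ∘ (q1 ∘ (q2 ∘ q3)) = r -> forall z (k : vHom z b), p ∘ (q1 ∘ (q2 ∘ (q3 ∘ k))) = r ∘ k.
Proof. intros E z k. rewrite -E. ra. reflexivity. Qed.
Lemma kk4 {V : BMC} {b c d e f g : bcat V} {p : vHom f g} {q1 : vHom e f} {q2 : vHom d e} {q3 : vHom c d} {q4 : vHom b c} {r : vHom b g} :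
  p ∘ (q1 ∘ (q2 ∘ (q3 ∘ q4))) = r -> forall z (k : vHom z b), p ∘ (q1 ∘ (q2 ∘ (q3 ∘ (q4 ∘ k)))) = r ∘ k.
Proof. intros E z k. rewrite -E. ra. reflexivity. Qed.

Tactic Notation "rwk" uconstr(L) := first [ rewrite (kk4 L) | rewrite (kk3 L) | rewrite (kk2 L) | rewrite (kk1 L) | rewrite L ]; ra.
Tactic Notation "rw" uconstr(L) := first [ rwk L | rwk (L _) | rwk (L _ _) | rwk (L _ _ _) | rwk (L _ _ _ _) | rwk (L _ _ _ _ _) | rwk (L _ _ _ _ _ _) ].

Lemma mono {V : BMC} {a b c : bcat V} {i : vHom b c} {i' : vHom c b} (E : i' ∘ i = vid b) {x y : vHom a b} :
  i ∘ x = i ∘ y -> x = y.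
Proof. intros F. rewrite -(c1l x) -(c1l y) -E !cA F. reflexivity. Qed.
Lemma epi {V : BMC} {a b c : bcat V} {i : vHom a b} {i' : vHom b a} (E : i ∘ i' = vid b) {x y : vHom b c} :
  x ∘ i = y ∘ i -> x = y.
Proof. intros F. rewrite -(c1r x) -(c1r y) -E -!cA F. reflexivity. Qed.

Lemma ai_nat {V : BMC} {a b c a' b' c' : bcat V} (f : vHom a a') (g : vHom b b') (h : vHom c c') :
  valphainv a' b' c' ∘ (f ⊠ (g ⊠ h)) = ((f ⊠ g) ⊠ h) ∘ valphainv a b c.
Proof.
  apply (mono (aia a' b' c')). rewrite -cA aai c1l -cA a_nat cA aai c1r. reflexivity.
Qed.
Lemma li_nat {V : BMC} {a b : bcat V} (f : vHom a b) : vlaminv b ∘ f = (vid (vI V) ⊠ f) ∘ vlaminv a.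
Proof.
  apply (mono (lil b)). rewrite -!cA lli c1l l_nat cA lli c1r. reflexivity.
Qed.
Lemma ri_nat {V : BMC} {a b : bcat V} (f : vHom a b) : vrhoinv b ∘ f = (f ⊠ vid (vI V)) ∘ vrhoinv a.
Proof.
  apply (mono (rir b)). rewrite -!cA rri c1l r_nat cA rri c1r. reflexivity.
Qed.

Lemma tsplit {V : BMC} {a b c d : bcat V} (f : vHom a b) (g : vHom c d) :
  f ⊠ g = (f ⊠ vid d) ∘ (vid a ⊠ g).
Proof. rewrite -tc c1l c1r. reflexivity. Qed.
Lemma tsplit' {V : BMC} {a b c d : bcat V} (f : vHom a b) (g : vHom c d) :
  f ⊠ g = (vid b ⊠ g) ∘ (f ⊠ vid c).
Proof. rewrite -tc c1l c1r. reflexivity. Qed.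
Lemma tc1 {V : BMC} {a b c d : bcat V} (f : vHom a b) (g : vHom b c) :
  (vid d ⊠ g) ∘ (vid d ⊠ f) = vid d ⊠ (g ∘ f).
Proof. rewrite -tc c1l. reflexivity. Qed.
Lemma tc2 {V : BMC} {a b c d : bcat V} (f : vHom a b) (g : vHom b c) :
  (g ⊠ vid d) ∘ (f ⊠ vid d) = (g ∘ f) ⊠ vid d.
Proof. rewrite -tc c1l. reflexivity. Qed.

Lemma tens1_inj {V : BMC} {a b : bcat V} (f g : vHom a b) : vid (vI V) ⊠ f = vid (vI V) ⊠ g -> f = g.
Proof.
  intro E. apply (epi (lli a)). rewrite -l_nat E l_nat. reflexivity.
Qed.
Lemma tens1r_inj {V : BMC} {a b : bcat V} (f g : vHom a b) : f ⊠ vid (vI V) = g ⊠ vid (vI V) -> f = g.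
Proof.
  intro E. apply (epi (rri a)). rewrite -r_nat E r_nat. reflexivity.
Qed.

Lemma K1 {V : BMC} (a b : bcat V) :
  vlam (a ⊗ b) ∘ valpha (vI V) a b = vlam a ⊠ vid b.
Proof.
  apply tens1_inj.
  set P := valpha (vI V) (vI V ⊗ a) b ∘ (valpha (vI V) (vI V) a ⊠ vid b).
  assert (HP : P ∘ ((valphainv _ _ _ ⊠ vid b) ∘ valphainv _ _ _) = vid _).
  { unfold P. ra. idtac. rw tc2. rewrite aai tid c1l aai. reflexivity. }
  apply (epi HP). unfold P.
  rewrite -tc1. ra. rw (pent (vI V) (vI V) a b).
  rw (tri (vI V) (a ⊗ b)). rewrite -tid -a_nat.
  rw (eq_sym (a_nat _ _ _)). rw tc2. rewrite tri. reflexivity.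
Qed.
Lemma K2 {V : BMC} (a b : bcat V) :
  (vid a ⊠ vrho b) ∘ valpha a b (vI V) = vrho (a ⊗ b).
Proof.
  apply tens1r_inj. rewrite -tc2. apply (mono (aia a b (vI V))).
  rw a_nat. rewrite -(tri b (vI V)) -tc1. ra. rw (pent a b (vI V) (vI V)).
  rw (eq_sym (a_nat _ _ _)). rewrite tid. rw tri. reflexivity.
Qed.

Lemma K3 {V : BMC} : vlam (vI V) = vrho (vI V).
Proof.
  assert (E : vlam (vI V ⊗ vI V) = vid (vI V) ⊠ vlam (vI V)).
  { apply (mono (lil (vI V))). rewrite l_nat. reflexivity. }
  apply tens1r_inj. rewrite -K1 -tri E. reflexivity.
Qed.
Lemma hex {V : BMC} (a b c : bcat V) :
  valpha b c a ∘ (vbraid a (b ⊗ c) ∘ valpha a b c)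
  = (vid b ⊠ vbraid a c) ∘ (valpha b a c ∘ (vbraid a b ⊠ vid c)).
Proof. rewrite -!cA. exact (hexagon1 (bax V) a b c). Qed.
Lemma bib {V : BMC} (a b : bcat V) : braidinv (bmon V) a b ∘ vbraid a b = vid _.
Proof. exact (braid_iso1 (bax V) a b). Qed.
Lemma BU {V : BMC} (a : bcat V) : vlam a ∘ vbraid a (vI V) = vrho a.
Proof.
  apply tens1r_inj. apply (mono (bib a (vI V))). symmetry.
  rewrite -(tri a (vI V)). ra. rw (b_nat (vid a) (vlam (vI V))). rewrite -(K1 (vI V) a). ra.
  rw hex. rw l_nat. rw (K1 a (vI V)). rw tc2. reflexivity.
Qed.
Tactic Notation "rwl" uconstr(L) := match goal with |- _ = ?R => let r := fresh "r" in set r := R; rw L; unfold r; clear r end.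
Tactic Notation "rwr" uconstr(L) := match goal with |- ?R = _ => let r := fresh "r" in set r := R; rw L; unfold r; clear r end.

Lemma K1i {V : BMC} (a b : bcat V) :
  (vlam a ⊠ vid b) ∘ valphainv (vI V) a b = vlam (a ⊗ b).
Proof. rewrite -K1 cA aai c1r. reflexivity. Qed.

Lemma K2i {V : BMC} (a b : bcat V) :
  valphainv a b (vI V) ∘ (vid a ⊠ vrhoinv b) = vrhoinv (a ⊗ b).
Proof.
  apply (mono (rir (a ⊗ b))). rewrite rri -K2. ra. rw aai. rewrite c1l. rw tc1. rewrite rri tid. reflexivity.
Qed.

Lemma P2 {V : BMC} (a b c d : bcat V) :
  valphainv a b (c ⊗ d) ∘ (vid a ⊠ valpha b c d)
  = valpha (a ⊗ b) c d ∘ ((valphainv a b c ⊠ vid d) ∘ valphainv a (b ⊗ c) d).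
Proof.
  assert (HP : (valpha a (b ⊗ c) d ∘ (valpha a b c ⊠ vid d)) ∘ ((valphainv a b c ⊠ vid d) ∘ valphainv a (b ⊗ c) d) = vid _).
  { ra. rw tc2. rewrite aai tid c1l aai. reflexivity. }
  apply (epi HP). ra. rw pent. rw aia. rewrite c1l. rw aia. rewrite c1l.
  rw tc2. rewrite aia tid c1r. reflexivity.
Qed.

Lemma P1 {V : BMC} (a b c d : bcat V) :
  valphainv a (b ⊗ c) d ∘ (vid a ⊠ valphainv b c d)
  = (valpha a b c ⊠ vid d) ∘ (valphainv (a ⊗ b) c d ∘ valphainv a b (c ⊗ d)).
Proof.
  assert (HP : (vid a ⊠ valpha b c d) ∘ (vid a ⊠ valphainv b c d) = vid _).
  { rewrite tc1 aai tid. reflexivity. }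
  apply (epi HP). ra. rw tc1. rewrite aia tid c1r. rw P2. rw aia. rewrite c1l. rw tc2.
  rewrite aai tid c1l. reflexivity.
Qed.

Lemma swap12 {V : BMC} {a a' b b' : bcat V} (f : vHom a a') (g : vHom b b') :
  (vid a' ⊠ g) ∘ (f ⊠ vid b) = (f ⊠ vid b') ∘ (vid a ⊠ g).
Proof. rewrite -!tc !c1l !c1r. reflexivity. Qed.

Lemma vmid_nat1 {V : BMC} {a a' : bcat V} (b c d : bcat V) (f : vHom a a') :
  vmid a' b c d ∘ ((f ⊠ vid b) ⊠ vid (c ⊗ d)) = ((f ⊠ vid c) ⊠ vid (b ⊗ d)) ∘ vmid a b c d.
Proof.
  unfold vmid. ra. rewrite -(tid c d). rw a_nat. rewrite !tid. rw swap12.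
  rewrite -(tid c (b ⊗ d)). rw ai_nat. reflexivity.
Qed.

Lemma vmid_counit {V : BMC} {a b c d e : bcat V} (u : vHom a (vI V)) (h : vHom (b ⊗ d) e) :
  ((vlam c ∘ (u ⊠ vid c)) ⊠ h) ∘ vmid a b c d
  = (vid c ⊠ h) ∘ (valpha c b d ∘ ((vbraid b c ⊠ vid d) ∘ (valphainv b c d
      ∘ ((vlam b ∘ (u ⊠ vid b)) ⊠ vid (c ⊗ d))))).
Proof.
  unfold vmid. ra.
  rwl (tsplit' (vlam c ∘ (u ⊠ vid c)) h). rwl (eq_sym (tc2 _ _)).
  rwl (eq_sym (ai_nat _ _ _)). rewrite tid. rwl K1i. rwl (eq_sym (swap12 _ _)).
  rwl l_nat. rewrite -(tid b (c ⊗ d)). rwl (eq_sym (a_nat _ _ _)). rwl K1. rwl tc2. reflexivity.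
Qed.

Lemma vmid_def {V : BMC} (a b c d : bcat V) : vmid a b c d =
  valphainv a c (b ⊗ d) ∘ ((vid a ⊠ (valpha c b d ∘ ((vbraid b c ⊠ vid d) ∘ valphainv b c d))) ∘ valpha a b (c ⊗ d)).
Proof. unfold vmid. ra. reflexivity. Qed.


Lemma L1 {V : BMC} (A : bcat V) (m : vHom (A ⊗ A) A) (δ : vHom A (A ⊗ A)) (ε : vHom A (vI V))
 (t : vHom (vI V) A)
 (HCR : vrho A ∘ ((vid A ⊠ ε) ∘ δ) = vid A)
 (HInt : m ∘ ((vid A ⊠ t) ∘ vrhoinv A) = t ∘ ε) :
 (vid A ⊠ t) ∘ vrhoinv A = (vid A ⊠ (m ∘ ((vid A ⊠ t) ∘ vrhoinv A))) ∘ δ.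
Proof.
  rewrite HInt -tc1. ra. rewrite -{1}(c1l (vid A ⊠ ε ∘ δ)) -(rir A). ra. rewrite HCR c1r. reflexivity.
Qed.

Lemma Key {V : BMC} (A : bcat V) (m : vHom (A ⊗ A) A) (δ : vHom A (A ⊗ A)) (ε : vHom A (vI V))
 (j : vHom (vI V) A) (S : vHom A A) (t : vHom (vI V) A)
 (Hass : m ∘ (m ⊠ vid A) = m ∘ ((vid A ⊠ m) ∘ valpha A A A))
 (HUL : m ∘ (j ⊠ vid A) = vlam A)
 (Hcoass : valpha A A A ∘ ((δ ⊠ vid A) ∘ δ) = (vid A ⊠ δ) ∘ δ)
 (HCL : vlam A ∘ ((ε ⊠ vid A) ∘ δ) = vid A)
 (HCR : vrho A ∘ ((vid A ⊠ ε) ∘ δ) = vid A)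
 (HDm : δ ∘ m = (m ⊠ m) ∘ (vmid A A A A ∘ (δ ⊠ δ)))
 (HAnt : m ∘ ((S ⊠ vid A) ∘ δ) = j ∘ ε)
 (HInt : m ∘ ((vid A ⊠ t) ∘ vrhoinv A) = t ∘ ε) :
 (m ⊠ vid A) ∘ (valphainv A A A ∘ ((S ⊠ (δ ∘ t)) ∘ vrhoinv A))
 = (vid A ⊠ m) ∘ (valpha A A A ∘ ((vbraid A A ⊠ vid A) ∘ (valphainv A A A ∘ ((vid A ⊠ (δ ∘ t)) ∘ vrhoinv A)))).
Proof.
  rwl (tsplit S (δ ∘ t)). rwl (eq_sym (tc1 t δ)). rwl (L1 _ _ _ _ _ HCR HInt). rwl tc1.
  rwl HDm. rwl (eq_sym (tc (vid A) δ t δ)). rewrite (c1r δ).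
  rwl (eq_sym (tc1 _ _)). rwl (eq_sym (tc1 _ _)). rwl (eq_sym (tc1 _ _)).
  rwl (eq_sym (tsplit S (m ⊠ m))). rwl ai_nat. rwl (eq_sym (tc (S ⊠ m) m m (vid A))). rewrite (c1l m).
  rwl (eq_sym (tc1 _ _)). rwl (eq_sym (tc1 _ _)).
  rwl P1. rwl (eq_sym (tc (valpha A A A) (m ∘ (S ⊠ m)) (vid (A ⊗ A)) m)). rewrite (c1r m).
  have H1 : m ∘ ((S ⊠ m) ∘ valpha A A A) = m ∘ ((m ∘ (S ⊠ vid A)) ⊠ vid A).
  { rewrite (tsplit' S m). ra. rewrite -(tid A A). rw (eq_sym (a_nat _ _ _)). rw (eq_sym Hass).
    rw tc2. reflexivity. }
  rewrite H1. rwl tc1. rwl tc1.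
  rwl (eq_sym (tc1 ((δ ⊠ (δ ∘ t)) ∘ vrhoinv A) (valpha A A (A ⊗ A)))).
  rwl (eq_sym (tc1 (vrhoinv A) (δ ⊠ (δ ∘ t)))).
  rwl ai_nat. rewrite (tid A A). rwl P2. rwl ai_nat. rwl K2i. rwl (ri_nat δ).
  rwl (eq_sym (tc δ (vid A ⊠ δ) (vid (vI V)) (δ ∘ t))). rewrite (c1r t).
  rwl (eq_sym (tc (vid A ⊠ δ ∘ δ) (valphainv A A A) (δ ∘ t) (vid (A ⊗ A)))).
  rewrite (c1l (δ ∘ t)). rewrite -Hcoass. ra. rw aia. rewrite c1l.
  pose proof (vmid_nat1 A A A δ) as N1. rewrite !vmid_def in N1. repeat rewrite cA in N1.
  have Hs : ((δ ⊠ vid A) ∘ δ) ⊠ (δ ∘ t) = ((δ ⊠ vid A) ⊠ vid (A ⊗ A)) ∘ (δ ⊠ (δ ∘ t)).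
  { rewrite -tc c1l. reflexivity. }
  rewrite Hs. ra. rwl N1.
  rwl (eq_sym (tc (δ ⊠ vid A) (m ∘ ((m ∘ (S ⊠ vid A)) ⊠ vid A)) (vid (A ⊗ A)) m)). rewrite (c1r m).
  rw tc2. rewrite HAnt -tc2. rw HUL.
  pose proof (@vmid_counit _ A A A A A ε m) as C. rewrite !vmid_def in C. repeat rewrite cA in C.
  rwl C.
  rwl (eq_sym (tc δ (vlam A ∘ (ε ⊠ vid A)) (δ ∘ t) (vid (A ⊗ A)))). rewrite c1l HCL.
  reflexivity.
Qed.


Lemma tri_i {V : BMC} (a b : bcat V) : (vrho a ⊠ vid b) ∘ valphainv a (vI V) b = vid a ⊠ vlam b.
Proof. rewrite -tri cA aai c1r. reflexivity. Qed.
Lemma K2' {V : BMC} (a b : bcat V) : vid a ⊠ vrho b = vrho (a ⊗ b) ∘ valphainv a b (vI V).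
Proof. rewrite -K2 cA aai c1r. reflexivity. Qed.
Lemma K1i2 {V : BMC} (a b : bcat V) : valpha (vI V) a b ∘ (vlaminv a ⊠ vid b) = vlaminv (a ⊗ b).
Proof.
  apply (mono (lil (a ⊗ b))). rewrite lli. rw K1. rw tc2. rewrite lli tid. reflexivity.
Qed.
Lemma BUi {V : BMC} (a : bcat V) : vbraid a (vI V) = vlaminv a ∘ vrho a.
Proof. rewrite -BU -cA lil c1l. reflexivity. Qed.

Lemma Part1 {V : BMC} (A : bcat V) (m : vHom (A ⊗ A) A) (δ : vHom A (A ⊗ A)) (ε : vHom A (vI V))
 (j : vHom (vI V) A) (S : vHom A A) (t : vHom (vI V) A) (f g : vHom A (vI V))
 (Hass : m ∘ (m ⊠ vid A) = m ∘ ((vid A ⊠ m) ∘ valpha A A A))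
 (HUL : m ∘ (j ⊠ vid A) = vlam A)
 (HUR : m ∘ (vid A ⊠ j) = vrho A)
 (Hcoass : valpha A A A ∘ ((δ ⊠ vid A) ∘ δ) = (vid A ⊠ δ) ∘ δ)
 (HCL : vlam A ∘ ((ε ⊠ vid A) ∘ δ) = vid A)
 (HCR : vrho A ∘ ((vid A ⊠ ε) ∘ δ) = vid A)
 (HDm : δ ∘ m = (m ⊠ m) ∘ (vmid A A A A ∘ (δ ⊠ δ)))
 (HAnt : m ∘ ((S ⊠ vid A) ∘ δ) = j ∘ ε)
 (HInt : m ∘ ((vid A ⊠ t) ∘ vrhoinv A) = t ∘ ε)
 (Hf : vrho A ∘ ((vid A ⊠ f) ∘ (δ ∘ t)) = j)
 (Hg : vlam A ∘ ((g ⊠ vid A) ∘ (δ ∘ t)) = j) :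
 g ∘ S = f.
Proof.
  have E1 : S = m ∘ ((S ⊠ j) ∘ vrhoinv A).
  { rewrite (tsplit' S j). ra. rw HUR. rw r_nat. rewrite rri c1r. reflexivity. }
  rewrite {1}E1 -{1}Hf.
  have E2 : S ⊠ (vrho A ∘ ((vid A ⊠ f) ∘ (δ ∘ t))) = (vid A ⊠ vrho A) ∘ ((vid A ⊠ (vid A ⊠ f)) ∘ (S ⊠ (δ ∘ t))).
  { rewrite -!tc !c1l. reflexivity. }
  rewrite E2 K2'. ra. rw (eq_sym (r_nat m)). rw ai_nat. rewrite (tid A A).
  rw (eq_sym (tc (vid (A ⊗ A)) m f (vid (vI V)))). rewrite (c1r m) (c1l f) (tsplit' m f). ra.
  rw (Key A m δ ε j S t Hass HUL Hcoass HCL HCR HDm HAnt HInt).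
  rw (eq_sym (r_nat g)). rw tc1. rw (eq_sym (swap12 g (f ∘ m))). rewrite -(tid A A).
  rw (eq_sym (a_nat _ _ _)). rw tc2. rw (eq_sym (b_nat (vid A) g)). rewrite BUi. ra.
  rewrite -tc2. ra. rw K1i2. rewrite -K3. rw l_nat. rw lli. rewrite c1l.
  rewrite -tc2. ra. rw (eq_sym (ai_nat _ _ _)). rw tri_i. rw tc1. rw tc1. rewrite Hg. rw HUR. rewrite rri c1r.
  reflexivity.
Qed.


Lemma K3i {V : BMC} : vlaminv (vI V) = vrhoinv (vI V).
Proof.
  apply (mono (lil (vI V))). rewrite lli K3 rri. reflexivity.
Qed.

Theorem mainTheorem3 (V : BMC) (H : HopfData V)
  (HH : is_Hopf_Vcategory H)
  (sinv : forall x y : hX H, vHom (hA H y x) (hA H x y))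
  (Hsinv : is_antipode_inverse sinv)
  (t : forall x y : hX H, vHom (vI V) (hA H x y))
  (Ht : left_integral t) (Hns : non_singular t)
  (x : hX H) (f g : vHom (hA H x x) (vI V))
  (Hf : vrho (hA H x x) ∘ (vid (hA H x x) ⊠ f) ∘ hdelta H x x ∘ t x x = hj H x)
  (Hg : vlam (hA H x x) ∘ (g ⊠ vid (hA H x x)) ∘ hdelta H x x ∘ t x x = hj H x) :
  g = f ∘ sinv x x
  /\ (forall (pbar qbar : vHom (hA H x x) (vdual (hA H x x))),
        p_map t x x ∘ pbar = vid (hA H x x) ->
        q_map t x x ∘ qbar = vid (hA H x x) ->
        vev (hA H x x) ∘ (pbar ⊠ vid (hA H x x)) ∘ (hj H x ⊠ vid (hA H x x))
          ∘ vlaminv (hA H x x)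
        = vev (hA H x x) ∘ vbraid (hA H x x) (vdual (hA H x x))
          ∘ (vid (hA H x x) ⊠ qbar) ∘ (vid (hA H x x) ⊠ hj H x)
          ∘ vrhoinv (hA H x x) ∘ sinv x x).
Proof.
  destruct HH as [[Hass [HUL HUR]] [[Hcoass [HCL [HCR [HDm [HEm [HDj HEj]]]]]] Hant]].
  set A := hA H x x. set m := hm H x x x. set δ := hdelta H x x. set ε := heps H x x.
  set j := hj H x. set S := hs H x x. set S' := sinv x x. set tt := t x x.
  have Hass' : m ∘ (m ⊠ vid A) = m ∘ ((vid A ⊠ m) ∘ valpha A A A).
  { rewrite -cA. exact (Hass x x x x). }
  have HUL' : m ∘ (j ⊠ vid A) = vlam A by exact (HUL x x).
  have HUR' : m ∘ (vid A ⊠ j) = vrho A by exact (HUR x x).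
  have Hcoass' : valpha A A A ∘ ((δ ⊠ vid A) ∘ δ) = (vid A ⊠ δ) ∘ δ.
  { rewrite -cA. exact (Hcoass x x). }
  have HCL' : vlam A ∘ ((ε ⊠ vid A) ∘ δ) = vid A by rewrite -cA; exact (HCL x x).
  have HCR' : vrho A ∘ ((vid A ⊠ ε) ∘ δ) = vid A by rewrite -cA; exact (HCR x x).
  have HDm' : δ ∘ m = (m ⊠ m) ∘ (vmid A A A A ∘ (δ ⊠ δ)) by rewrite -cA; exact (HDm x x x).
  have HAnt' : m ∘ ((S ⊠ vid A) ∘ δ) = j ∘ ε by rewrite -cA; exact (proj2 (Hant x x)).
  have HInt' : m ∘ ((vid A ⊠ tt) ∘ vrhoinv A) = tt ∘ ε by rewrite -cA; exact (Ht x x x).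
  have HSS : S ∘ S' = vid A by exact (proj1 (Hsinv x x)).
  have P1 : forall f g : vHom A (vI V),
    vrho A ∘ ((vid A ⊠ f) ∘ (δ ∘ tt)) = j ->
    vlam A ∘ ((g ⊠ vid A) ∘ (δ ∘ tt)) = j -> g = f ∘ S'.
  { intros f0 g0 Hf0 Hg0.
    rewrite -(Part1 A m δ ε j S tt f0 g0 Hass' HUL' HUR' Hcoass' HCL' HCR' HDm' HAnt' HInt' Hf0 Hg0).
    rewrite cA HSS c1r. reflexivity. }
  split.
  { apply P1. - move: Hf. rewrite !cA. intro E. exact E. - move: Hg. rewrite !cA. intro E. exact E. }
  intros pbar qbar Hp Hq.
  apply P1.
  - transitivity (q_map t x x ∘ (qbar ∘ j)); last first.
    { rewrite -cA Hq c1l. reflexivity. }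
    rewrite /q_map -/A -/δ -/tt. ra.
    rwl (eq_sym (tc1 _ _)). rwl (eq_sym (tc1 _ _)). rwl (eq_sym (tc1 _ _)). rwl (eq_sym (tc1 _ _)).
    have K2'' : forall a b : bcat V, vid a ⊠ vrhoinv b = valpha a b (vI V) ∘ vrhoinv (a ⊗ b).
    { intros a b. rewrite -K2i -cA aai c1l. reflexivity. }
    rwl K2''. rwl (ri_nat δ). rwl (ri_nat tt). rwl (eq_sym (a_nat _ _ _)). rwl (eq_sym (a_nat _ _ _)).
    rewrite !tid.
    rwr (li_nat qbar). rwr (li_nat j). rewrite K3i.
    rwr (eq_sym (swap12 _ _)). rwr (eq_sym (swap12 _ _)). rwr (eq_sym (swap12 _ _)). rwr (eq_sym (swap12 _ _)).
    reflexivity.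
  - transitivity (p_map t x x ∘ (pbar ∘ j)); last first.
    { rewrite -cA Hp c1l. reflexivity. }
    rewrite /p_map -/A -/δ -/tt. ra.
    rwl (eq_sym (tc2 _ _)). rwl (eq_sym (tc2 _ _)). rwl (eq_sym (tc2 _ _)).
    have K1i3 : forall a b : bcat V, vlaminv a ⊠ vid b = valphainv (vI V) a b ∘ vlaminv (a ⊗ b).
    { intros a b. rewrite -K1i2 -cA aia c1l. reflexivity. }
    rwl K1i3. rwl (li_nat δ). rwl (li_nat tt). rwl (eq_sym (ai_nat _ _ _)). rwl (eq_sym (ai_nat _ _ _)).
    rewrite !tid K3i.
    rwr (ri_nat pbar). rwr (ri_nat j).
    rwr swap12. rwr swap12. rwr swap12. rwr swap12.
    reflexivity.
Qed.
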